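(* Let $V$ be a vector configuration and $W\subseteq V$ a subconfiguration such that $\operatorname{lin}(W)\cap V=W$ (i.e. the elements of $V$ lying in $\operatorname{lin}(W)$ are exactly those of $W$). Then $\mathrm{DD}(V)\ge\mathrm{DD}(W)+\mathrm{DD}(V/W)$.
   Context: A vector configuration is a finite family (repetitions allowed) $V$ of vectors in $\mathbb{R}^r$; a subconfiguration is a subfamily, and cardinalities count multiplicities. The quotient $V/W$ is the vector configuration in $\mathbb{R}^r/\operatorname{lin}(W)$ formed by the images of the elements of $V\setminus W$ under the canonical projection. Covector discrepancy: for a configuration $U$ in a real vector space $E$, $\mathrm{DD}(U)=\max_f\big|\,|\{u\in U: f(u)>0\}|-|\{u\in U:f(u)<0\}|\,\big|$ over all linear functionals $f$ on $E$. *)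

(* Defs.v *)
From HB Require Import structures.
From mathcomp Require Import all_boot all_order all_algebra.
From mathcomp Require Import boolp reals.
Set Implicit Arguments. Unset Strict Implicit. Unset Printing Implicit Defensive.
Import Order.TTheory GRing.Theory Num.Theory.
Local Open Scope ring_scope.

(* A vector configuration in R^d is a finite family (seq) of row vectors.
   A linear functional on R^d is u |-> (u *m c) 0 0 for c : 'cV_d
   (every linear functional has this form). *)
Definition lfun (R : realType) (d : nat) (c : 'cV[R]_d) (u : 'rV[R]_d) : R :=
  (u *m c) ord0 ord0.

Definition npos (R : realType) (d : nat) (U : seq 'rV[R]_d) (c : 'cV[R]_d) : nat :=
  count (fun u => 0 < lfun c u) U.
Definition nneg (R : realType) (d : nat) (U : seq 'rV[R]_d) (c : 'cV[R]_d) : nat :=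
  count (fun u => lfun c u < 0) U.

(* | #pos - #neg | (absolute difference of naturals) *)
Definition disc (R : realType) (d : nat) (U : seq 'rV[R]_d) (c : 'cV[R]_d) : nat :=
  ((npos U c - nneg U c) + (nneg U c - npos U c))%N.

(* covector discrepancy DD(U) = max over functionals of disc; the values of
   disc are bounded by size U, so this maximum over 0..size U is the max. *)
Definition DD (R : realType) (d : nat) (U : seq 'rV[R]_d) : nat :=
  \max_(k < (size U).+1 | `[< exists c : 'cV[R]_d, disc U c = k >]) k.

Definition lin (R : realType) (d : nat) (W : seq 'rV[R]_d) : 'M[R]_d :=
  (\sum_(w <- W) <<w>>)%MS.

(* Main.v *)
Require Import Defs.
From HB Require Import structures.
From mathcomp Require Import all_boot all_order all_algebra.
From mathcomp Require Import boolp reals.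
From mathcomp Require Import lra zify.
Set Implicit Arguments. Unset Strict Implicit. Unset Printing Implicit Defensive.
Import Order.TTheory GRing.Theory Num.Theory.
Local Open Scope ring_scope.

Section Aux.
Variable R : realType.

Definition sR (d : nat) (U : seq 'rV[R]_d) (c : 'cV[R]_d) : R :=
  \sum_(u <- U) Num.sg (lfun c u).

Lemma sR_cnt d (U : seq 'rV[R]_d) c :
  sR U c = (npos U c)%:R - (nneg U c)%:R.
Proof.
rewrite /sR /npos /nneg; elim: U => [|u U IH]; first by rewrite big_nil subrr.
rewrite big_cons IH /= !natrD.
case: (ltrgtP (lfun c u) 0) => H.
- rewrite ltr0_sg //=; lra.
- rewrite gtr0_sg //=; lra.
- rewrite H sgr0 /=; lra.
Qed.

Lemma disc_sR d (U : seq 'rV[R]_d) c : ((disc U c)%:R : R) = `|sR U c|.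
Proof.
rewrite sR_cnt /disc natrD.
case: (leqP (npos U c) (nneg U c)) => H.
- have -> : (npos U c - nneg U c = 0)%N by apply/eqP; rewrite subn_eq0.
  rewrite add0r natrB // ler0_norm; last by rewrite subr_le0 ler_nat.
  by rewrite opprB.
- have -> : (nneg U c - npos U c = 0)%N by apply/eqP; rewrite subn_eq0 ltnW.
  rewrite addr0 natrB ?(ltnW H) // ger0_norm // subr_ge0 ler_nat ltnW //.
Qed.

Lemma disc_le d (U : seq 'rV[R]_d) c : (disc U c <= size U)%N.
Proof.
rewrite /disc /npos /nneg.
have H1 := count_size (fun u => 0 < lfun c u) U.
have H2 := count_size (fun u => lfun c u < 0) U.
lia.
Qed.

Lemma DD_ge d (U : seq 'rV[R]_d) c : (disc U c <= DD U)%N.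
Proof.
rewrite /DD.
have Hi : (disc U c < (size U).+1)%N by rewrite ltnS disc_le.
apply: (@leq_bigmax_cond _ _ (fun k : 'I_(size U).+1 => nat_of_ord k) (Ordinal Hi)).
by apply/asboolP; exists c.
Qed.

Lemma DD_ex d (U : seq 'rV[R]_d) : exists c, disc U c = DD U.
Proof.
rewrite /DD.
have [|i0 Hi0 ->] := @eq_bigmax_cond _ (fun k : 'I_(size U).+1 => `[< exists c : 'cV[R]_d, disc U c = k >]) (fun k => nat_of_ord k).
  apply/card_gt0P; exists ord0; rewrite unfold_in /=; apply/asboolP; exists 0.
  rewrite /disc /npos /nneg.
  have E : forall u : 'rV[R]_d, lfun 0 u = 0 by move=> u; rewrite /lfun mulmx0 mxE.
  rewrite (eq_count (a2 := pred0)); last by move=> u; rewrite E ltxx.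
  rewrite (eq_count (a1 := fun u => lfun 0 u < 0) (a2 := pred0)); last by move=> u; rewrite E ltxx.
  by rewrite count_pred0.
by move: Hi0; rewrite unfold_in => /asboolP.
Qed.

Lemma lfunN d (c : 'cV[R]_d) u : lfun (- c) u = - lfun c u.
Proof. by rewrite /lfun mulmxN mxE. Qed.

Lemma lfunDZ d (a b : 'cV[R]_d) (e : R) u : lfun (a + e *: b) u = lfun a u + e * lfun b u.
Proof. by rewrite /lfun mulmxDr -scalemxAr !mxE. Qed.

Lemma sRN d (U : seq 'rV[R]_d) c : sR U (- c) = - sR U c.
Proof.
rewrite /sR -sumrN; apply: eq_bigr => u _; by rewrite lfunN sgrN.
Qed.

Lemma DD_pos d (U : seq 'rV[R]_d) : exists c, sR U c = (DD U)%:R.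
Proof.
have [c Hc] := DD_ex U.
have := disc_sR U c; rewrite Hc => E.
case: (lerP 0 (sR U c)) => H.
- by exists c; rewrite E ger0_norm.
- by exists (- c); rewrite E ltr0_norm // sRN.
Qed.

End Aux.
Section Aux2.
Variable R : realType.

Lemma sg_small (x z : R) : `|z| < `|x| -> Num.sg (x + z) = Num.sg x.
Proof.
move=> H.
case: (ltrgtP x 0) => Hx.
- move: H; rewrite (ltr0_norm Hx) ltr_norml => /andP [H1 H2].
  rewrite !ltr0_sg //; lra.
- move: H; rewrite (gtr0_norm Hx) ltr_norml => /andP [H1 H2].
  rewrite !gtr0_sg //; lra.
- by move: H; rewrite Hx normr0 ltNge normr_ge0.
Qed.

Lemma sg_pert1 (x y e : R) : x != 0 -> 0 < e -> e <= `|x| / (`|y| + 1) ->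
  Num.sg (x + e * y) = Num.sg x.
Proof.
move=> Hx He Hle; apply: sg_small.
have Hp : 0 < `|y| + 1 by have := normr_ge0 y; lra.
rewrite ler_pdivlMr // mulrDr mulr1 in Hle.
rewrite normrM (gtr0_norm He); lra.
Qed.

Lemma pert_gen d (U : seq 'rV[R]_d) (a b : 'cV[R]_d) :
  exists2 e, 0 < e & forall e', 0 < e' -> e' <= e -> forall u, u \in U ->
    Num.sg (lfun (a + e' *: b) u) =
    if lfun a u == 0 then Num.sg (lfun b u) else Num.sg (lfun a u).
Proof.
elim: U => [|u U [e He IH]]; first by exists 1 => //; rewrite ltr01.
pose eu := if lfun a u == 0 then 1 else `|lfun a u| / (`|lfun b u| + 1).
have Heu : 0 < eu.
  rewrite /eu; case: eqP => H; first exact: ltr01.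
  apply: divr_gt0; first by rewrite normr_gt0; apply/eqP.
  by have := normr_ge0 (lfun b u); lra.
exists (Num.min e eu); first by rewrite lt_min He Heu.
move=> e' He' Hle v; rewrite in_cons => /orP [/eqP ->|Hv].
- rewrite lfunDZ; case: eqP => H.
  + by rewrite H add0r sgrM (gtr0_sg He') mul1r.
  + apply: sg_pert1 => //; first by apply/eqP.
    apply: (le_trans Hle); rewrite ge_min; apply/orP; right.
    by rewrite /eu; case: eqP.
- apply: IH => //; apply: (le_trans Hle); rewrite ge_min lexx //.
Qed.

Lemma pert d (U : seq 'rV[R]_d) (a b : 'cV[R]_d) :
  exists2 e, 0 < e & forall u, u \in U ->
    Num.sg (lfun (a + e *: b) u) =
    if lfun a u == 0 then Num.sg (lfun b u) else Num.sg (lfun a u).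
Proof.
have [e He H] := pert_gen U a b; exists e => //; exact: H.
Qed.

Lemma nz_coord d (v : 'rV[R]_d) : v != 0 -> exists j, v ord0 j != 0.
Proof.
move=> Hv; apply/existsP; apply: contraR Hv; rewrite negb_exists => /forallP H.
apply/eqP/matrixP => i j; rewrite mxE (ord1 i); exact/eqP/negPn/H.
Qed.

Lemma generic d (U : seq 'rV[R]_d) : (forall u, u \in U -> u != 0) ->
  exists g : 'cV[R]_d, forall u, u \in U -> lfun g u != 0.
Proof.
elim: U => [|v U IH] HU; first by exists 0.
have [g Hg] : exists g : 'cV[R]_d, forall u, u \in U -> lfun g u != 0.
  by apply: IH => u Hu; apply: HU; rewrite in_cons Hu orbT.
have [j Hj] := nz_coord (HU v (mem_head _ _)).
pose h : 'cV[R]_d := delta_mx j ord0.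
have Hh : lfun h v = v ord0 j.
  rewrite /lfun mxE (bigD1 j) //= big1 ?addr0; first by rewrite mxE !eqxx mulr1.
  by move=> k Hk; rewrite mxE (negbTE Hk) mulr0.
have [e He Pe] := pert (v :: U) g h.
exists (g + e *: h) => u Hu.
rewrite -sgr_eq0 (Pe u Hu).
case: (lfun g u =P 0) => Hz; last by rewrite sgr_eq0; apply/eqP.
move: Hu; rewrite in_cons => /orP [/eqP Huv|Hu].
- by rewrite Huv Hh sgr_eq0.
- by move: (Hg u Hu); rewrite Hz eqxx.
Qed.

End Aux2.
Lemma sum_mask (R : realType) (T : Type) (F : T -> R) (m : bitseq) (V : seq T) :
  size m = size V ->
  \sum_(u <- V) F u = \sum_(u <- mask m V) F u + \sum_(u <- mask (map negb m) V) F u.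
Proof.
elim: V m => [|v V IH] [|b m] //=; first by rewrite !big_nil addr0.
case=> Hs; rewrite big_cons (IH m Hs).
by case: b; rewrite /= !big_cons; [rewrite addrA | rewrite addrCA].
Qed.

Lemma mask_idx (R : realType) r (m : bitseq) (V : seq 'rV[R]_r) v :
  size m = size V -> v \in mask (map negb m) V ->
  exists i, [/\ (i < size V)%N, nth 0 V i = v & nth false m i = false].
Proof.
elim: V m => [|w V IH] [|b m] //= Hs.
case: Hs => Hs; case: b => /=.
- move=> /(IH m Hs) [i [H1 H2 H3]]; by exists i.+1.
- rewrite in_cons => /orP [/eqP ->|]; first by exists 0%N.
  move=> /(IH m Hs) [i [H1 H2 H3]]; by exists i.+1.
Qed.

Lemma in_lin (R : realType) r (W : seq 'rV[R]_r) w : w \in W -> (w <= lin W)%MS.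
Proof.
rewrite /lin; elim: W => [|a W IH] //; rewrite in_cons big_cons => /orP [/eqP ->|Hw].
- apply: submx_trans (addsmxSl _ _); by rewrite genmxE.
- apply: submx_trans (addsmxSr _ _); exact: IH.
Qed.
Unset Implicit Arguments.
Theorem mainTheorem11 (R : realType) (r : nat) (V : seq 'rV[R]_r) (m : bitseq)
    (s : nat) (Q : 'M[R]_(r, s)) :
  size m = size V ->
  (forall i, (i < size V)%N -> (nth 0 V i <= lin (mask m V))%MS -> nth false m i) ->
  (kermx Q == lin (mask m V))%MS ->
  row_full Q ->
  (DD (mask m V) + DD [seq v *m Q | v <- mask (map negb m) V] <= DD V)%N.
Proof.
move=> Hs Hsat Hker _.
set W := mask m V; set V2 := mask (map negb m) V; set X := [seq v *m Q | v <- V2].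
have HlK : (lin W <= kermx Q)%MS by case/andP: Hker.
have HKl : (kermx Q <= lin W)%MS by case/andP: Hker.
have HW0 : forall w, w \in W -> w *m Q = 0.
  by move=> w Hw; apply/sub_kermxP; exact: submx_trans (in_lin Hw) HlK.
have HX : forall x, x \in X -> x != 0.
  move=> x /mapP [v Hv ->]; apply/negP => /eqP H0.
  have [i [Hi Hvi Hmi]] := mask_idx Hs Hv.
  have : nth false m i by apply: Hsat => //; rewrite Hvi; apply: submx_trans HKl; apply/sub_kermxP.
  by rewrite Hmi.
have [cQ HcQ] := DD_pos X.
have [g Hg] := generic HX.
pose T := \sum_(x <- X) (if lfun cQ x == 0 then Num.sg (lfun g x) else 0).
pose g' := if 0 <= T then g else - g.
have Hg' : forall x, x \in X -> lfun g' x != 0.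
  by move=> x Hx; rewrite /g'; case: ifP => _; rewrite ?lfunN ?oppr_eq0 Hg.
have HT : 0 <= \sum_(x <- X) (if lfun cQ x == 0 then Num.sg (lfun g' x) else 0).
  rewrite /g'; case: ifP => H; first by [].
  have -> : \sum_(x <- X) (if lfun cQ x == 0 then Num.sg (lfun (- g) x) else 0) = - T.
    rewrite /T -sumrN; apply: eq_bigr => x _; rewrite lfunN sgrN; case: ifP => //.
    by rewrite oppr0.
  by move: H; rewrite oppr_ge0 => /negbT; rewrite -ltNge => /ltW.
have [e He Pe] := pert X cQ g'.
pose d := cQ + e *: g'.
have Hd1 : (DD X)%:R <= sR X d.
  have -> : sR X d = sR X cQ + \sum_(x <- X) (if lfun cQ x == 0 then Num.sg (lfun g' x) else 0).
    rewrite /sR -big_split; apply: eq_big_seq => x Hx; rewrite Pe //.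
    by rewrite /=; case: (lfun cQ x =P 0) => [->|_]; rewrite ?sgr0 ?add0r ?addr0.
  by rewrite HcQ; lra.
have Hd2 : forall x, x \in X -> lfun d x != 0.
  move=> x Hx; rewrite -sgr_eq0 Pe //; case: (lfun cQ x =P 0) => H.
  - by rewrite sgr_eq0 Hg'.
  - by rewrite sgr_eq0; apply/eqP.
pose c1 := Q *m d.
have Hc1 : forall v, lfun c1 v = lfun d (v *m Q) by move=> v; rewrite /lfun mulmxA.
have [cW HcW] := DD_pos W.
have [e2 He2 Pe2] := pert V c1 cW.
pose c := c1 + e2 *: cW.
have HsW : sR W c = sR W cW.
  apply: eq_big_seq => w Hw; rewrite Pe2; last by apply: (mem_mask Hw).
  by rewrite Hc1 HW0 // /lfun mul0mx mxE eqxx.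
have HsV2 : sR V2 c = sR X d.
  rewrite /sR big_map; apply: eq_big_seq => v Hv; rewrite Pe2; last by apply: (mem_mask Hv).
  by rewrite Hc1 (negbTE (Hd2 _ (map_f _ Hv))).
have HsV : sR V c = sR W c + sR V2 c by rewrite /sR (sum_mask _ Hs).
apply: (leq_trans _ (DD_ge V c)).
rewrite -(ler_nat R) natrD disc_sR.
apply: (le_trans _ (ler_norm _)).
rewrite HsV HsW HsV2 HcW; lra.
Qed.
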